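(* Let $(\mathcal M,g)$ be a Lorentzian manifold, $K_{\mu\nu}$ a symmetric tensor with $\nabla_\kappa K_{\mu\nu}=0$ (Levi-Civita connection of $g$), $0<b<1$, $m$ a constant, and $L_b$ the Bogoslovsky–Finsler geodesic Lagrangian below. Let $M^2>0$ be a constant and suppose a vector field $\Upsilon$ satisfies, for some smooth function $\Omega(\mathrm x)$, $$\mathcal L_\Upsilon\left(g_{\mu\nu}-\frac{b}{1-b}M^2K_{\mu\nu}\right)=2\Omega(\mathrm x)\left(g_{\mu\nu}+M^2K_{\mu\nu}\right).$$ Then along every solution $(\mathrm x(\lambda),n(\lambda))$ of the Euler–Lagrange equations of $L_b$ on which $\mathcal G>0$, $\mathcal K>0$ and $\mathcal K/\mathcal G=M^{-2}$, the quantity $I=\Upsilon^\mu p_\mu$ is constant.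
   Context: Notation: $\mathcal G=-g_{\mu\nu}\dot{\mathrm x}^\mu\dot{\mathrm x}^\nu$, $\mathcal K=K_{\mu\nu}\dot{\mathrm x}^\mu\dot{\mathrm x}^\nu$, dots denote $d/d\lambda$. The Bogoslovsky–Finsler line element is $ds_F^2=g_{\mu\nu}d\mathrm x^\mu d\mathrm x^\nu\left[\frac{K_{\alpha\beta}d\mathrm x^\alpha d\mathrm x^\beta}{-g_{\mu\nu}d\mathrm x^\mu d\mathrm x^\nu}\right]^b$, and its einbein geodesic Lagrangian is $L_b=-\frac{1}{2n}\mathcal K^{\,b}\mathcal G^{\,1-b}-\frac{m^2}{2}n$ with $n(\lambda)>0$ an auxiliary variable varied independently. Momenta: $p_\mu=\partial L_b/\partial\dot{\mathrm x}^\mu$. Since $K$ is covariantly constant, the ratio $\mathcal K/\mathcal G$ is constant along every solution; $M^{-2}$ denotes its value. *)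

(* Defs.v *)
(* Coordinate (single-chart) formalization. *)
From HB Require Import structures.
From mathcomp Require Import all_boot all_order all_algebra.
From mathcomp Require Import all_classical all_reals all_analysis.
Set Implicit Arguments. Unset Strict Implicit. Unset Printing Implicit Defensive.
Import Order.TTheory GRing.Theory Num.Theory.
Import numFieldNormedType.Exports.
Local Open Scope classical_set_scope.
Local Open Scope ring_scope.

Section Defs.
Context {R : realType} {d : nat}.

Definition ebasis (i : 'I_d) : 'rV[R]_d := delta_mx 0 i.

Definition pd (i : 'I_d) (f : 'rV[R]_d -> R) (p : 'rV[R]_d) : R :=
  'D_(ebasis i) f p.

Fixpoint Dseq (vs : seq 'rV[R]_d) (f : 'rV[R]_d -> R) : 'rV[R]_d -> R :=
  match vs with
  | [::] => f
  | v :: vs' => fun p => 'D_v (Dseq vs' f) p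
  end.

Definition smooth_on (U : set 'rV[R]_d) (f : 'rV[R]_d -> R) : Prop :=
  forall (vs : seq 'rV[R]_d) (p : 'rV[R]_d), U p ->
    (forall v, derivable (Dseq vs f) p v) /\ {for p, continuous (Dseq vs f)}.

Definition qf (A : 'M[R]_d) (v : 'rV[R]_d) : R :=
  \sum_(i < d) \sum_(j < d) A i j * v 0 i * v 0 j.

Definition christoffel (g : 'rV[R]_d -> 'M[R]_d) (p : 'rV[R]_d)
  (l k m : 'I_d) : R :=
  2^-1 * \sum_(s < d) (invmx (g p)) l s *
     (pd k (fun q => g q s m) p + pd m (fun q => g q s k) p
      - pd s (fun q => g q k m) p).

Definition cov_deriv (g K : 'rV[R]_d -> 'M[R]_d) (p : 'rV[R]_d)
  (k mu nu : 'I_d) : R :=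
  pd k (fun q => K q mu nu) p
  - \sum_(l < d) christoffel g p l k mu * K p l nu
  - \sum_(l < d) christoffel g p l k nu * K p mu l.

Definition lie_deriv (Y : 'rV[R]_d -> 'rV[R]_d) (h : 'rV[R]_d -> 'M[R]_d)
  (p : 'rV[R]_d) (mu nu : 'I_d) : R :=
  \sum_(l < d) (Y p 0 l * pd l (fun q => h q mu nu) p
               + h p l nu * pd mu (fun q => Y q 0 l) p
               + h p mu l * pd nu (fun q => Y q 0 l) p).

Definition Lb (b m : R) (g K : 'rV[R]_d -> 'M[R]_d)
  (x v : 'rV[R]_d) (n : R) : R :=
  - (1 / (2 * n)) * ((qf (K x) v) `^ b * (- qf (g x) v) `^ (1 - b))
  - m ^+ 2 / 2 * n.

Definition momentum (b m : R) (g K : 'rV[R]_d -> 'M[R]_d)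
  (x v : 'rV[R]_d) (n : R) (mu : 'I_d) : R :=
  'D_(ebasis mu) (fun w => Lb b m g K x w n) v.

Definition dLdx (b m : R) (g K : 'rV[R]_d -> 'M[R]_d)
  (x v : 'rV[R]_d) (n : R) (mu : 'I_d) : R :=
  'D_(ebasis mu) (fun y => Lb b m g K y v n) x.

Definition dLdn (b m : R) (g K : 'rV[R]_d -> 'M[R]_d)
  (x v : 'rV[R]_d) (n : R) : R :=
  'D_1 (fun t : R => Lb b m g K x v t) n.

Definition euler_lagrange (b m : R) (g K : 'rV[R]_d -> 'M[R]_d)
  (I : set R) (x : R -> 'rV[R]_d) (n : R -> R) : Prop :=
  forall t, I t ->
    derivable x t 1 /\
    (forall mu : 'I_d,
        derivable (fun s => momentum b m g K (x s) ((derive1 x) s) (n s) mu) t 1 /\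
        derive1 (fun s => momentum b m g K (x s) ((derive1 x) s) (n s) mu) t
          = dLdx b m g K (x t) ((derive1 x) t) (n t) mu) /\
    dLdn b m g K (x t) ((derive1 x) t) (n t) = 0.

End Defs.

Definition lorentzian {R : realType} {d : nat} (A : 'M[R]_d.+1) : Prop :=
  A^T = A /\
  exists P : 'M[R]_d.+1, P \in unitmx /\
    P^T *m A *m P = diag_mx (\row_(i < d.+1) if i == ord0 then -1 else 1).

(* Main.v *)
Require Import Defs.
From HB Require Import structures.
From mathcomp Require Import all_boot all_order all_algebra.
From mathcomp Require Import all_classical all_reals all_analysis.
From mathcomp Require Import ring.
Import Order.TTheory GRing.Theory Num.Theory.
Import numFieldNormedType.Exports.
Local Open Scope classical_set_scope.
Local Open Scope ring_scope.

Set Implicit Arguments. Unset Strict Implicit. Unset Printing Implicit Defensive.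

Section H0.
Context {R : realType}.


Lemma dir_fun_eq {V W : normedModType R} (f : V -> W) (a v : V) (t : R) :
  (fun h : R => h^-1 *: (f (h *: v + (a + t *: v)) - f (a + t *: v))) =
  (fun h : R => h^-1 *: ((fun s : R => f (a + s *: v)) (h *: (1:R) + t)
                          - (fun s : R => f (a + s *: v)) t)).
Proof.
apply/funext => h /=; congr (_ *: (f _ - _)).
by rewrite [h *: 1]mulr1 scalerDl addrCA.
Qed.

Lemma dir_derivable {V W : normedModType R} (f : V -> W) (a v : V) (t : R) :
  derivable f (a + t *: v) v <-> derivable (fun s : R => f (a + s *: v)) t 1.
Proof. by rewrite /derivable dir_fun_eq. Qed.

Lemma dir_derive {V W : normedModType R} (f : V -> W) (a v : V) (t : R) :
  'D_v f (a + t *: v) = 'D_1 (fun s : R => f (a + s *: v)) t.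
Proof. by rewrite /derive dir_fun_eq. Qed.



Lemma chi_is_derive (psi : R -> R) (c s : R) : derivable psi s 1 ->
  is_derive s 1 (fun t => psi t - c * t) (derive1 psi s - c).
Proof.
move=> dp; have hp : is_derive s 1 psi (derive1 psi s).
  by rewrite derive1E; apply: derivableP.
apply: is_derive_eq; rewrite /GRing.scale/= mulr1 //.
Qed.

Lemma mvt_bound (psi : R -> R) (c e r : R) :
  (forall s, `|s| <= `|r| -> derivable psi s 1 /\ `|derive1 psi s - c| <= e) ->
  `|psi r - psi 0 - c * r| <= e * `|r|.
Proof.
move=> H.
pose chi := fun t => psi t - c * t.
have hd (s : R) : `|s| <= `|r| -> is_derive s (1:R) chi (derive1 psi s - c).
  by move=> /H [dp _]; apply: chi_is_derive.
have hcont (a b : R) : (forall s, a <= s <= b -> `|s| <= `|r|) -> {within `[a, b], continuous chi}.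
  move=> hab; apply: continuous_in_subspaceT => s; rewrite inE /= in_itv /= => /hab /hd hs.
  by apply/differentiable_continuous/derivable1_diffP; exact: ex_derive.
have -> : psi r - psi 0 - c * r = chi r - chi 0 by rewrite /chi mulr0 subr0 addrAC.
have [r0|r0] := leP 0 r.
  have h1 : forall s, s \in `]0, r[ -> is_derive s 1 chi (derive1 psi s - c).
    move=> s; rewrite in_itv /= => /andP[q1 q2]; apply: hd.
    by rewrite (ger0_norm (ltW q1)) (ger0_norm r0) ltW.
  have h2 : {within `[0, r], continuous chi}.
    by apply: hcont => s /andP[q1 q2]; rewrite (ger0_norm q1) (ger0_norm r0).
  have [s s0r ->] := @MVT_segment _ chi (fun s => derive1 psi s - c) 0 r r0 h1 h2.
  move: s0r; rewrite in_itv /= => /andP[s1 s2].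
  rewrite subr0 normrM (ger0_norm r0) ler_wpM2r //.
  by case: (H s); [rewrite (ger0_norm s1) (ger0_norm r0)|].
have h1 : forall s, s \in `]r, 0[ -> is_derive s 1 chi (derive1 psi s - c).
  move=> s; rewrite in_itv /= => /andP[q1 q2]; apply: hd.
  by rewrite (ltr0_norm q2) (ltr0_norm r0) lerN2 ltW.
have h2 : {within `[r, 0], continuous chi}.
  apply: hcont => s /andP[q1 q2]; rewrite (ltr0_norm r0).
  by rewrite ler_norml opprK q1 /= (le_trans q2) // oppr_ge0 ltW.
have [s s0r eq] := @MVT_segment _ chi (fun s => derive1 psi s - c) r 0 (ltW r0) h1 h2.
move: s0r; rewrite in_itv /= => /andP[s1 s2].
rewrite -normrN opprB eq sub0r normrM normrN ler_wpM2r //.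
case: (H s) => //.
by rewrite (ltr0_norm r0) ler_norml opprK s1 /= (le_trans s2) // oppr_ge0 ltW.
Qed.

End H0.

Section H.
Context {R : realType} {N : nat}.

Lemma mx_entry_le (h : 'rV[R]_N) i : `|h 0 i| <= `|h|.
Proof.
rewrite [X in _ <= X]/Num.norm /= mx_normrE.
exact: (le_bigmax _ _ (0, i)).
Qed.

Lemma mx_norm_le (h : 'rV[R]_N) r : 0 <= r -> (forall i, `|h 0 i| <= r) -> `|h| <= r.
Proof.
move=> r0 H; rewrite [X in X <= _]/Num.norm /= mx_normrE.
apply: bigmax_le => // -[a b] _ /=.
by rewrite (ord1 a); apply: H.
Qed.

Definition linsum (c : 'I_N -> R) (v : 'rV[R]_N) : R := \sum_i v 0 i * c i.

Lemma linsum_is_linear c : linear (linsum c).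
Proof.
move=> a u v; rewrite /linsum scaler_sumr -big_split /=; apply: eq_bigr => i _.
by rewrite !mxE /GRing.scale /= mulrDl mulrA.
Qed.

HB.instance Definition _ c := GRing.isLinear.Build R 'rV[R]_N R *:%R (linsum c) (linsum_is_linear c).

Lemma linsum_continuous c : continuous (linsum c).
Proof.
move=> v.
have -> : linsum c = \sum_i (fun w : 'rV[R]_N => w 0 i * c i).
  by rewrite fct_sumE; apply/funext => w.
elim/big_ind: _ => //.
- exact: cst_continuous.
- by move=> f g hf hg; apply: continuousD.
- move=> i _; apply: (@continuousZr_tmp _ _ _ (fun w : 'rV[R]_N => w 0 i)).
  exact: coord_continuous.
Qed.


Lemma C1_diff (f : 'rV[R]_N -> R) (U : set 'rV[R]_N) (p : 'rV[R]_N) :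
  open U -> U p ->
  (forall q, U q -> forall i, derivable f q (ebasis i)) ->
  (forall i, {for p, continuous (fun q => 'D_(ebasis i) f q)}) ->
  differentiable f p /\ 'd f p = linsum (fun i => 'D_(ebasis i) f p) :> (_ -> _).
Proof.
move=> oU Up df cf.
set c := fun i => 'D_(ebasis i) f p.
have Lo : f \o shift p = cst (f p) + (linsum c : 'rV[R]_N -> R) +o_ (0 : 'rV[R]_N) id.
  apply/eqaddoP => eps eps0.
  pose e' := eps / (N%:R + 1).
  have e'0 : 0 < e' by rewrite divr_gt0 // ltr_wpDl.
  have h1 : \forall q \near p, U q by exact: open_nbhs_nbhs.
  have h2 : \forall q \near p, forall i, `|c i - 'D_(ebasis i) f q| <= e'.
    apply: (@filter_forall _ 'I_N (fun i q => `|c i - 'D_(ebasis i) f q| <= e') (nbhs p) _).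
    by move=> i; move: (cf i) => /cvgr_dist_le => /(_ e' e'0).
  have nearp : \forall q \near p, U q /\ forall i, `|c i - 'D_(ebasis i) f q| <= e'.
    by near=> q; split; near: q.
  have [del del0 Hdel] := (@nbhs_normP R _ p _).1 nearp.
  apply/(@nbhs_normP R _ (0 : 'rV[R]_N)); exists del => // h /= hdel.
  rewrite sub0r normrN in hdel.
  have -> : (f \o +%R^~ p - (cst (f p) + linsum c)) h = f (h + p) - (f p + linsum c h) by [].
  pose z := fun k : nat => \row_(i < N) (if (i < k)%N then p 0 i + h 0 i else p 0 i).
  have z0 : z 0%N = p by apply/rowP => i; rewrite mxE.
  have zN : z N = h + p by apply/rowP => i; rewrite !mxE ltn_ord addrC.
  have zS (k : 'I_N) : z k.+1 = z k + h 0 k *: ebasis k.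
    apply/rowP => i; rewrite !mxE /=.
    case: (ltngtP i k) => hik.
    - have ik : (i == k) = false by rewrite -val_eqE /= ltn_eqF.
      by rewrite ltnS (ltnW hik) ik mulr0 addr0.
    - have ik : (i == k) = false by rewrite -val_eqE /= gtn_eqF.
      by rewrite ltnS leqNgt hik /= ik mulr0 addr0.
    - by move/val_inj: hik => ->; rewrite ltnSn eqxx mulr1.
  have zball (k : 'I_N) s : `|s| <= `|h 0 k| -> `|p - (z k + s *: ebasis k)| < del.
    move=> hs; apply: le_lt_trans hdel; apply: mx_norm_le => // i.
    rewrite !mxE /=.
    case: (ltngtP i k) => hik.
    - have ik : (i == k) = false by rewrite -val_eqE /= ltn_eqF.
      by rewrite ik mulr0 addr0 opprD addNKr normrN mx_entry_le.
    - have ik : (i == k) = false by rewrite -val_eqE /= gtn_eqF.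
      by rewrite ik mulr0 addr0 subrr normr0.
    - move/val_inj: hik => ->; rewrite eqxx mulr1 opprD addNKr normrN (le_trans hs) //.
      exact: mx_entry_le.
  have term (k : 'I_N) : `|f (z k.+1) - f (z k) - c k * h 0 k| <= e' * `|h 0 k|.
    rewrite zS.
    have := @mvt_bound R (fun s => f (z k + s *: ebasis k)) (c k) e' (h 0 k).
    rewrite /= scale0r addr0; apply => s hs.
    have [Uq bq] := Hdel _ (zball k s hs).
    split.
    - apply/dir_derivable; exact: df.
    - rewrite derive1E -dir_derive distrC; exact: bq.
  have tele : f (h + p) - (f p + linsum c h) =
      \sum_(k < N) (f (z k.+1) - f (z k) - c k * h 0 k).
    rewrite sumrB -(big_mkord xpredT (fun k => f (z k.+1) - f (z k))) telescope_sumr // zN z0 /linsum.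
    rewrite opprD addrA; congr (_ - _); apply: eq_bigr => i _; exact: mulrC.
  have eN : e' * N%:R <= eps.
    rewrite /e' mulrAC ler_pdivrMr ?ltr_wpDl // ler_wpM2l ?(ltW eps0) // lerDl ler01 //.
  rewrite tele; apply: le_trans (ler_norm_sum _ _ _) _.
  apply: le_trans (_ : \sum_(k < N) e' * `|h| <= _).
    apply: ler_sum => k _; apply: le_trans (term k) _.
    by apply: ler_wpM2l; [exact: ltW | exact: mx_entry_le].
  by rewrite sumr_const card_ord -mulr_natr mulrAC; apply: ler_wpM2r.
have dU : 'd f p = linsum c :> (_ -> _) by apply: diff_unique; [exact: linsum_continuous | exact: Lo].
split; last exact: dU.
apply/diff_locallyP; rewrite dU; split; [exact: linsum_continuous | exact: Lo].
Unshelve. all: by end_near. Qed.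


Lemma chain_curve (f : 'rV[R]_N -> R) (U : set 'rV[R]_N) (x : R -> 'rV[R]_N) t :
  open U -> U (x t) ->
  (forall q, U q -> forall i, derivable f q (ebasis i)) ->
  (forall i, {for x t, continuous (fun q => 'D_(ebasis i) f q)}) ->
  derivable x t 1 ->
  derivable (f \o x) t 1 /\
  derive1 (f \o x) t = \sum_i derive1 x t 0 i * pd i f (x t).
Proof.
move=> oU Ux df cf dx.
have [dfx dd] := C1_diff oU Ux df cf.
have dx' : differentiable x t by apply/derivable1_diffP.
have dc : differentiable (f \o x) t by apply: differentiable_comp.
split; first exact/derivable1_diffP.
rewrite derive1E' // diff_comp // /= dd -derive1E' //.
Qed.

End H.

Section H2.
Context {R : realType} {N : nat}.

Lemma sum3 (I : finType) (a b c : I -> R) s :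
  \sum_i a i + s * (\sum_i b i + s * \sum_i c i) = \sum_i (a i + s * (b i + s * c i)).
Proof. by rewrite mulr_sumr -big_split mulr_sumr -big_split. Qed.

Definition qfB (A : 'M[R]_N) (v e : 'rV[R]_N) : R :=
  \sum_(i < N) \sum_(j < N) A i j * (e 0 i * v 0 j + v 0 i * e 0 j).

Lemma qf_shift (A : 'M[R]_N) v e s :
  qf A (v + s *: e) = qf A v + s * (qfB A v e + s * qf A e).
Proof.
rewrite /qf /qfB sum3; apply: eq_bigr => i _; rewrite sum3; apply: eq_bigr => j _.
rewrite !mxE; ring.
Qed.

Lemma poly_derive (a b c : R) :
  is_derive (0:R) (1:R) (fun s : R => a + s * (b + s * c)) b.
Proof.
by apply: is_derive_eq; rewrite /GRing.scale /=; ring.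
Qed.


Lemma Lb_is_derive (b m n0 : R) (k gg : R -> R) (dk dg : R) :
  n0 != 0 -> 0 < k 0 -> 0 < - gg 0 -> is_derive (0:R) (1:R) k dk -> is_derive (0:R) (1:R) gg dg ->
  is_derive (0:R) (1:R)
    (fun s => - (1 / (2 * n0)) * ((k s) `^ b * (- gg s) `^ (1 - b)) - m ^+ 2 / 2 * n0)
    (- (1 / (2 * n0)) * (k 0 `^ b * (- gg 0) `^ (1 - b)) *
       (b * dk / k 0 + (1 - b) * (- dg) / (- gg 0))).
Proof.
move=> n0n k0 g0 hk hg.
have hk' : is_derive (0:R) (1:R) (fun s => k s `^ b) (b * k 0 `^ (b - 1) * dk).
  exact: (is_derive1_comp (is_derive1_powR b k0) hk).
have hgn : is_derive (0:R) (1:R) (fun s => - gg s) (- dg).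
  by apply: is_derive_eq.
have hg' : is_derive (0:R) (1:R) (fun s => (- gg s) `^ (1 - b)) ((1 - b) * (- gg 0) `^ (1 - b - 1) * (- dg)).
  exact: (is_derive1_comp (g := fun s => - gg s) (x := 0) (is_derive1_powR (1 - b) g0) hgn).

apply: is_derive_eq.
rewrite /GRing.scale /=.
have kn : k 0 != 0 by rewrite gt_eqF.
have gn : - gg 0 != 0 by rewrite gt_eqF.
rewrite (@powRB _ (k 0) b 1) ?kn ?implybT // (@powRB _ (- gg 0) (1 - b) 1) ?gn ?implybT //.
rewrite !powRr1 ?ltW //.
field.
by rewrite -oppr_eq0 gn kn n0n.
Qed.


Lemma qf_line_derive (A : 'M[R]_N) v e :
  is_derive (0:R) (1:R) (fun s => qf A (v + s *: e)) (qfB A v e).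
Proof.
have -> : (fun s => qf A (v + s *: e)) = (fun s => qf A v + s * (qfB A v e + s * qf A e)).
  by apply/funext => s; rewrite qf_shift.
exact: poly_derive.
Qed.

Lemma momentum_val (b m : R) (g K : 'rV[R]_N -> 'M[R]_N) x v n0 mu :
  n0 != 0 -> 0 < qf (K x) v -> 0 < - qf (g x) v ->
  momentum b m g K x v n0 mu =
   - (1 / (2 * n0)) * (qf (K x) v `^ b * (- qf (g x) v) `^ (1 - b)) *
     (b * qfB (K x) v (ebasis mu) / qf (K x) v
      + (1 - b) * (- qfB (g x) v (ebasis mu)) / (- qf (g x) v)).
Proof.
move=> n0n kp gp; rewrite /momentum.
have := dir_derive (fun w => Lb b m g K x w n0) v (ebasis mu) 0.
rewrite scale0r addr0 => ->.
have H := Lb_is_derive b m (k := fun s => qf (K x) (v + s *: ebasis mu))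
  (gg := fun s => qf (g x) (v + s *: ebasis mu)) n0n.
move: H; rewrite /= !scale0r !addr0 => /(_ _ _ kp gp (qf_line_derive _ _ _) (qf_line_derive _ _ _)) H.
rewrite /Lb; exact: derive_val.
Qed.


Definition qfD (h : 'rV[R]_N -> 'M[R]_N) (p v : 'rV[R]_N) (mu : 'I_N) : R :=
  \sum_(i < N) \sum_(j < N) pd mu (fun q => h q i j) p * v 0 i * v 0 j.

Lemma coord_line_derive (f : 'rV[R]_N -> R) p mu :
  derivable f p (ebasis mu) ->
  is_derive (0:R) (1:R) (fun s => f (p + s *: ebasis mu)) (pd mu f p).
Proof.
move=> df.
have df' : derivable f (p + 0 *: ebasis mu) (ebasis mu) by rewrite scale0r addr0.
have := derivableP (proj1 (dir_derivable f p (ebasis mu) 0) df').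
by rewrite -dir_derive scale0r addr0.
Qed.

Lemma qf_field_derive (h : 'rV[R]_N -> 'M[R]_N) p v mu :
  (forall i j, derivable (fun q => h q i j) p (ebasis mu)) ->
  is_derive (0:R) (1:R) (fun s => qf (h (p + s *: ebasis mu)) v) (qfD h p v mu).
Proof.
move=> dh.
have -> : (fun s => qf (h (p + s *: ebasis mu)) v) =
    \sum_(i < N) \sum_(j < N) (fun s => h (p + s *: ebasis mu) i j * v 0 i * v 0 j).
  apply/funext => s; rewrite /qf fct_sumE; apply: eq_bigr => i _.
  by rewrite fct_sumE.
apply: is_derive_sum => i; apply: is_derive_sum => j.
have := coord_line_derive (dh i j) => H.
by apply: is_derive_eq; rewrite /GRing.scale /=; ring.
Qed.


Lemma dLdx_val (b m : R) (g K : 'rV[R]_N -> 'M[R]_N) x v n0 mu :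
  n0 != 0 -> 0 < qf (K x) v -> 0 < - qf (g x) v ->
  (forall i j, derivable (fun q => K q i j) x (ebasis mu)) ->
  (forall i j, derivable (fun q => g q i j) x (ebasis mu)) ->
  dLdx b m g K x v n0 mu =
   - (1 / (2 * n0)) * (qf (K x) v `^ b * (- qf (g x) v) `^ (1 - b)) *
     (b * qfD K x v mu / qf (K x) v
      + (1 - b) * (- qfD g x v mu) / (- qf (g x) v)).
Proof.
move=> n0n kp gp dK dg; rewrite /dLdx.
have := dir_derive (fun y => Lb b m g K y v n0) x (ebasis mu) 0.
rewrite scale0r addr0 => ->.
have H := Lb_is_derive b m (k := fun s => qf (K (x + s *: ebasis mu)) v)
  (gg := fun s => qf (g (x + s *: ebasis mu)) v) n0n.
move: H; rewrite /= !scale0r !addr0 => /(_ _ _ kp gp (qf_field_derive v dK) (qf_field_derive v dg)) H.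
rewrite /Lb; exact: derive_val.
Qed.


Lemma ebasisE (l i : 'I_N) : (ebasis l : 'rV[R]_N) 0 i = (i == l)%:R.
Proof. by rewrite /ebasis mxE eqxx. Qed.

Lemma sum_delta_r (F : 'I_N -> R) l : \sum_i F i * (i == l)%:R = F l.
Proof.
rewrite (bigD1 l) //= eqxx mulr1 big1 ?addr0 // => i /negbTE ->; exact: mulr0.
Qed.

Lemma sum_delta_l (F : 'I_N -> R) l : \sum_i (i == l)%:R * F i = F l.
Proof. by rewrite -(sum_delta_r F l); apply: eq_bigr => i _; rewrite mulrC. Qed.

Lemma qfB_basis (A : 'M[R]_N) v l :
  qfB A v (ebasis l) = \sum_j A l j * v 0 j + \sum_i A i l * v 0 i.
Proof.
rewrite /qfB.
transitivity (\sum_i ((i == l)%:R * \sum_j A i j * v 0 j) + \sum_i (\sum_j (A i j * v 0 i) * (j == l)%:R)).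
  rewrite -big_split; apply: eq_bigr => i _ /=.
  rewrite mulr_sumr -big_split; apply: eq_bigr => j _ /=.
  rewrite !ebasisE; ring.
by rewrite sum_delta_l; congr (_ + _); apply: eq_bigr => i _; rewrite sum_delta_r.
Qed.



Lemma lie_contract (Y : 'rV[R]_N -> 'rV[R]_N) (h : 'rV[R]_N -> 'M[R]_N) (p v : 'rV[R]_N) :
  \sum_mu \sum_nu lie_deriv Y h p mu nu * v 0 mu * v 0 nu =
  \sum_l ((\sum_nu v 0 nu * pd nu (fun q => Y q 0 l) p) * qfB (h p) v (ebasis l)
          + Y p 0 l * qfD h p v l).
Proof.
transitivity (\sum_mu \sum_nu \sum_l
   ((Y p 0 l * pd l (fun q => h q mu nu) p + h p l nu * pd mu (fun q => Y q 0 l) p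
    + h p mu l * pd nu (fun q => Y q 0 l) p) * v 0 mu * v 0 nu)).
  apply: eq_bigr => mu _; apply: eq_bigr => nu _.
  by rewrite /lie_deriv !mulr_suml.
under eq_bigr => mu _ do rewrite exchange_big.
rewrite exchange_big /=.
apply: eq_bigr => l _.
rewrite qfB_basis /qfD mulrDr.
have e1 : (\sum_nu v 0 nu * pd nu (fun q => Y q 0 l) p) * (\sum_j h p l j * v 0 j) =
   \sum_mu \sum_nu (v 0 mu * pd mu (fun q => Y q 0 l) p) * (h p l nu * v 0 nu).
  by rewrite mulr_suml; apply: eq_bigr => mu _; rewrite mulr_sumr.
have e2 : (\sum_nu v 0 nu * pd nu (fun q => Y q 0 l) p) * (\sum_i h p i l * v 0 i) =
   \sum_mu \sum_nu (v 0 nu * pd nu (fun q => Y q 0 l) p) * (h p mu l * v 0 mu).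
  rewrite mulrC mulr_suml; apply: eq_bigr => mu _; rewrite mulr_sumr.
  by apply: eq_bigr => nu _; rewrite mulrC.
have e3 : Y p 0 l * (\sum_i \sum_j pd l (fun q => h q i j) p * v 0 i * v 0 j) =
   \sum_mu \sum_nu Y p 0 l * (pd l (fun q => h q mu nu) p * v 0 mu * v 0 nu).
  by rewrite mulr_sumr; apply: eq_bigr => mu _; rewrite mulr_sumr.
rewrite e1 e2 e3 -!big_split; apply: eq_bigr => mu _ /=.
rewrite -!big_split; apply: eq_bigr => nu _ /=.
ring.
Qed.

Lemma lie_lin (Y : 'rV[R]_N -> 'rV[R]_N) (g K : 'rV[R]_N -> 'M[R]_N) (c : R) p mu nu :
  (forall l i j, derivable (fun q => g q i j) p (ebasis l)) ->
  (forall l i j, derivable (fun q => K q i j) p (ebasis l)) ->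
  lie_deriv Y (fun q => g q - c *: K q) p mu nu =
  lie_deriv Y g p mu nu - c * lie_deriv Y K p mu nu.
Proof.
move=> dg dK; rewrite /lie_deriv mulr_sumr -sumrB; apply: eq_bigr => l _.
have -> : (fun q => (g q - c *: K q) mu nu) = (fun q => g q mu nu) - c *: (fun q => K q mu nu).
  by apply/funext => q; rewrite !mxE.
rewrite /pd deriveB ?deriveZ //; last exact: derivableZ.
rewrite !mxE /GRing.scale /=; ring.
Qed.

End H2.

Unset Implicit Arguments. Set Strict Implicit. Set Printing Implicit Defensive.

Theorem theorem3 (R : realType) (d : nat)
  (U : set 'rV[R]_d.+2) (g K : 'rV[R]_d.+2 -> 'M[R]_d.+2)
  (b m M2 : R) (Y : 'rV[R]_d.+2 -> 'rV[R]_d.+2) (Omega : 'rV[R]_d.+2 -> R)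
  (a c : R) (x : R -> 'rV[R]_d.+2) (n : R -> R) :
  open U ->
  (forall p, U p -> lorentzian (g p)) ->
  (forall i j, smooth_on U (fun p => g p i j)) ->
  (forall p, U p -> (K p)^T = K p) ->
  (forall i j, smooth_on U (fun p => K p i j)) ->
  (forall p, U p -> forall k mu nu, cov_deriv g K p k mu nu = 0) ->
  0 < b -> b < 1 ->
  0 < M2 ->
  (forall i, smooth_on U (fun p => Y p 0 i)) ->
  smooth_on U Omega ->
  (forall p, U p -> forall mu nu,
     lie_deriv Y (fun q => g q - (b / (1 - b) * M2) *: K q) p mu nu
     = 2 * Omega p * (g p + M2 *: K p) mu nu) ->
  (* the solution, defined on the open interval ]a, c[ *)
  (forall t, a < t < c -> U (x t)) ->
  (forall t, a < t < c -> 0 < n t) ->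
  euler_lagrange b m g K `]a, c[ x n ->
  (forall t, a < t < c -> 0 < - qf (g (x t)) ((derive1 x) t)) ->
  (forall t, a < t < c -> 0 < qf (K (x t)) ((derive1 x) t)) ->
  (forall t, a < t < c ->
     qf (K (x t)) ((derive1 x) t) / (- qf (g (x t)) ((derive1 x) t)) = M2^-1) ->
  forall t1 t2, a < t1 < c -> a < t2 < c ->
    \sum_(mu < d.+2) Y (x t1) 0 mu * momentum b m g K (x t1) ((derive1 x) t1) (n t1) mu
    = \sum_(mu < d.+2) Y (x t2) 0 mu * momentum b m g K (x t2) ((derive1 x) t2) (n t2) mu.
Proof.
move=> oU _ gs _ Ks _ b0 b1 M0 Ys _ lie xU npos EL Gpos Kpos ratio.
pose P mu s := momentum b m g K (x s) ((derive1 x) s) (n s) mu.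
pose I s := \sum_(mu < d.+2) Y (x s) 0 mu * P mu s.
suff key : forall t, a < t < c -> is_derive t (1:R) I 0.
  move=> t1 t2 h1 h2; change (I t1 = I t2).
  have gen u w : a < u < c -> a < w < c -> u <= w -> I u = I w.
    move=> /andP[hu1 hu2] /andP[hw1 hw2] uw.
    have hin s : u <= s <= w -> a < s < c.
      by move=> /andP[s1 s2]; rewrite (lt_le_trans hu1 s1) (le_lt_trans s2 hw2).
    have hd : forall s, s \in `]u, w[ -> is_derive s (1:R) I ((fun=> 0) s).
      move=> s; rewrite in_itv /= => /andP[s1 s2]; apply: key; apply: hin.
      by rewrite !ltW.
    have hc : {within `[u, w], continuous I}.
      apply: continuous_in_subspaceT => s; rewrite inE /= in_itv /= => /hin /key hs.
      by apply/differentiable_continuous/derivable1_diffP; exact: ex_derive.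
    have [s _ E] := MVT_segment uw hd hc.
    by apply/eqP; rewrite eq_sym -subr_eq0 E mul0r.
  case: (leP t1 t2) => h; first exact: gen.
  by apply/esym/gen => //; exact: ltW.
move=> t ht.
have [dx [hmom _]] := EL t ht.
set p := x t; set v := derive1 x t.
have Up : U p := xU t ht.
have nn : n t != 0 by rewrite gt_eqF // npos.
have Kp := Kpos t ht; have Gp := Gpos t ht.
have dgp l i j : derivable (fun q => g q i j) p (ebasis l) := ((gs i j) [::] p Up).1 _.
have dKp l i j : derivable (fun q => K q i j) p (ebasis l) := ((Ks i j) [::] p Up).1 _.
have chain mu : derivable (fun s => Y (x s) 0 mu) t 1 /\
    derive1 (fun s => Y (x s) 0 mu) t = \sum_i v 0 i * pd i (fun q => Y q 0 mu) p.
  apply: (chain_curve (f := fun q => Y q 0 mu) oU Up) => //.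
  - by move=> q Uq i; exact: ((Ys mu) [::] q Uq).1.
  - by move=> i; exact: ((Ys mu) [:: ebasis i] p Up).2.
have term mu : is_derive t (1:R) (fun s => Y (x s) 0 mu * P mu s)
    (Y p 0 mu * dLdx b m g K p v (n t) mu
     + P mu t * \sum_i v 0 i * pd i (fun q => Y q 0 mu) p).
  have [dY eY] := chain mu; have [dP eP] := hmom mu.
  have hY : is_derive t (1:R) (fun s => Y (x s) 0 mu) (derive1 (fun s => Y (x s) 0 mu) t).
    by rewrite derive1E; exact: derivableP.
  have hP : is_derive t (1:R) (P mu) (derive1 (P mu) t).
    by rewrite derive1E; exact: derivableP.
  apply: is_derive_eq.
  rewrite /GRing.scale /= -eY.
  by rewrite [derive1 (P mu) t]eP.
have Ieq : I = \sum_(mu < d.+2) (fun s => Y (x s) 0 mu * P mu s).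
  by rewrite fct_sumE.
rewrite Ieq; apply: is_derive_eq.
pose Kq := qf (K p) v; pose Gq := - qf (g p) v.
pose C := - (1 / (2 * n t)) * (Kq `^ b * Gq `^ (1 - b)).
pose DY l := \sum_nu v 0 nu * pd nu (fun q => Y q 0 l) p.
have E : \sum_(i < d.+2) (Y p 0 i * dLdx b m g K p v (n t) i + P i t * DY i) =
   C * b / Kq * \sum_l (DY l * qfB (K p) v (ebasis l) + Y p 0 l * qfD K p v l)
   - C * (1 - b) / Gq * \sum_l (DY l * qfB (g p) v (ebasis l) + Y p 0 l * qfD g p v l).
  rewrite !mulr_sumr -sumrB; apply: eq_bigr => mu _.
  rewrite /P momentum_val // dLdx_val //.
  rewrite /C /Kq /Gq; ring.
rewrite E -!lie_contract.
pose cc := b / (1 - b) * M2.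
have hqf : qf (g p) v + M2 * qf (K p) v = 0.
  have := ratio t ht; rewrite -/p -/v => hr.
  have Gn : - qf (g p) v != 0 by rewrite gt_eqF.
  have M2n : M2 != 0 by rewrite gt_eqF.
  have : qf (K p) v = M2^-1 * (- qf (g p) v) by rewrite -hr divfK.
  move=> ->; field; exact: M2n.
have lieq : \sum_mu \sum_nu lie_deriv Y g p mu nu * v 0 mu * v 0 nu
   - cc * \sum_mu \sum_nu lie_deriv Y K p mu nu * v 0 mu * v 0 nu = 0.
  transitivity (\sum_mu \sum_nu lie_deriv Y (fun q => g q - cc *: K q) p mu nu * v 0 mu * v 0 nu).
    rewrite mulr_sumr -sumrB; apply: eq_bigr => mu _.
    rewrite mulr_sumr -sumrB; apply: eq_bigr => nu _.
    rewrite lie_lin //; ring.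
  transitivity (2 * Omega p * (qf (g p) v + M2 * qf (K p) v)); last by rewrite hqf mulr0.
  rewrite /qf mulr_sumr -big_split /= mulr_sumr; apply: eq_bigr => mu _.
  rewrite mulr_sumr -big_split /= mulr_sumr; apply: eq_bigr => nu _.
  rewrite lie // !mxE; ring.
move/eqP: lieq; rewrite subr_eq0 => /eqP ->.
have hG : Gq = M2 * Kq by rewrite /Gq /Kq -[LHS]addr0 -hqf; ring.
rewrite hG /cc.
have Kn : Kq != 0 by rewrite gt_eqF.
have M2n : M2 != 0 by rewrite gt_eqF.
have bn : 1 - b != 0 by rewrite subr_eq0 eq_sym lt_eqF.
field.
by rewrite bn Kn M2n.
Qed.
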